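(* Let $A$ be a Lagrange tensor along $c$ with base point $t_0$ and $W\subset E_{t_0}$ a $p$-dimensional subspace. At every regular point $t$, with $g=g_W$, $$p\,\frac{g''}{g}=\frac1p(\operatorname{tr}S_1)^2-\operatorname{tr}(S_1^2)-3\operatorname{tr}(S_2^TS_2)-\sum_{i=1}^p\langle R_tw_i,w_i\rangle,$$ where $W_t=A_t^{-*}W\subset E_t$, $w_1,\dots,w_p$ is an orthonormal basis of $W_t$, and $S_1:W_t\to W_t$, $S_2:W_t\to W_t^\perp$ are defined by $S_tw=S_1w+S_2w$ for $w\in W_t$ (orthogonal projections of $S_tw$ to $W_t$ and $W_t^\perp$).
   Context: Setting: $(M^{n+1},g)$ is a Riemannian manifold and $c:I\to M$ a unit-speed geodesic. $E_t=\dot c(t)^\perp\subset T_{c(t)}M$, $R_t(x)=R(x,\dot c)\dot c$ on $E_t$, and $'$ is $\nabla_{\dot c}$. A Lagrange tensor with base point $t_0\in I$ is a smooth family of linear maps $A_t:E_{t_0}\to E_t$ with $A_t''+R_tA_t=0$, $\ker A_{t_0}\cap\ker A'_{t_0}=0$ and $\langle A_t'v,A_tw\rangle=\langle A_tv,A_t'w\rangle$ for all $t$, $v,w\in E_{t_0}$. $t$ is regular if $A_t$ is invertible; there $S_t=A_t'A_t^{-1}$ (self-adjoint). $A_t^{-*}=(A_t^* )^{-1}$ where $A_t^*$ is the adjoint. For a $p$-dimensional $W\subset E_{t_0}$ with orthonormal basis $e_1,\dots,e_p$, $(M_t)_{ij}=\langle A_t^{-*}e_i,A_t^{-*}e_j\rangle$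 and $g_W(t)=(\det M_t)^{-1/(2p)}$ at regular $t$. *)

(* Defs.v *)
From Stdlib Require Import Reals.
Open Scope R_scope.

(* Everything is expressed in a parallel orthonormal frame along the geodesic c,
   identifying each E_t (and E_{t0}) with R^n; vectors/matrices are indexed by
   nat and only indices < n are meaningful. *)
Definition vec := nat -> R.
Definition mat := nat -> nat -> R.

Fixpoint rsum (n : nat) (f : nat -> R) : R :=
  match n with O => 0 | S m => rsum m f + f m end.

Definition inner (n : nat) (u v : vec) : R := rsum n (fun i => u i * v i).
Definition mv (n : nat) (M : mat) (v : vec) : vec :=
  fun i => rsum n (fun k => M i k * v k).
Definition mm (n : nat) (M N : mat) : mat :=
  fun i j => rsum n (fun k => M i k * N k j).
Definition transp (M : mat) : mat := fun i j => M j i.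

Definition skip (i k : nat) : nat := if Nat.ltb k i then k else S k.
Definition minor (M : mat) (i j : nat) : mat := fun a b => M (skip i a) (skip j b).
Fixpoint det (n : nat) (M : mat) : R :=
  match n with
  | O => 1
  | S m => rsum (S m) (fun j => (-1) ^ j * M O j * det m (minor M O j))
  end.

(* adjugate and inverse (meaningful when det <> 0) *)
Definition adj (n : nat) (M : mat) : mat :=
  fun i j => (-1) ^ (i + j) * det (Nat.pred n) (minor M j i).
Definition inv (n : nat) (M : mat) : mat := fun i j => adj n M i j / det n M.

Definition Ainvstar (n : nat) (A : R -> mat) (t : R) : mat := inv n (transp (A t)).

Definition Sop (n : nat) (A A1 : R -> mat) (t : R) : mat := mm n (A1 t) (inv n (A t)).

Definition Mgram (n p : nat) (A : R -> mat) (e : nat -> vec) (t : R) : mat :=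
  fun i j => inner n (mv n (Ainvstar n A t) (e i)) (mv n (Ainvstar n A t) (e j)).
Definition gW (n p : nat) (A : R -> mat) (e : nat -> vec) (t : R) : R :=
  Rpower (det p (Mgram n p A e t)) (- / (2 * INR p)).

Definition orthonormal (n p : nat) (v : nat -> vec) : Prop :=
  forall i j, (i < p)%nat -> (j < p)%nat ->
    inner n (v i) (v j) = if Nat.eqb i j then 1 else 0.

Definition in_span (n p : nat) (v : nat -> vec) (x : vec) : Prop :=
  exists c : nat -> R, forall k, (k < n)%nat -> x k = rsum p (fun j => c j * v j k).

Definition proj (n p : nat) (w : nat -> vec) (x : vec) : vec :=
  fun k => rsum p (fun j => inner n x (w j) * w j k).

Definition S1op (n p : nat) (w : nat -> vec) (S : mat) (x : vec) : vec :=
  proj n p w (mv n S x).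
Definition S2op (n p : nat) (w : nat -> vec) (S : mat) (x : vec) : vec :=
  fun k => mv n S x k - proj n p w (mv n S x) k.

Definition trace_on (n p : nat) (w : nat -> vec) (T : vec -> vec) : R :=
  rsum p (fun i => inner n (T (w i)) (w i)).

(* tr(S1), tr(S1^2), tr(S2^T S2) = sum_i <S2^T S2 w_i, w_i> = sum_i |S2 w_i|^2 *)
Definition trS1 n p w S := trace_on n p w (S1op n p w S).
Definition trS1sq n p w S := trace_on n p w (fun x => S1op n p w S (S1op n p w S x)).
Definition trS2TS2 n p w S := rsum p (fun i => inner n (S2op n p w S (w i)) (S2op n p w S (w i))).

(* Main.v *)
Require Import Defs.
From Stdlib Require Import Reals.
Open Scope R_scope.

Module Aux.
From Stdlib Require Import Lra Lia FunctionalExtensionality ClassicalEpsilon.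
From mathcomp Require Import all_boot all_algebra.
From mathcomp Require Import Rstruct zify.
Import Defs.
Import GRing.Theory.

Local Close Scope ring_scope. Local Open Scope R_scope.

Local Open Scope ring_scope.

Definition mx n (M : mat) : 'M[R]_n := \matrix_(i < n, j < n) M i j.

Lemma rsum_big n f : rsum n f = \sum_(i < n) f i.
Proof. elim: n => [|n IH] /=; first by rewrite big_ord0. by rewrite big_ord_recr /= IH. Qed.

Lemma skip_bump i k : skip i k = bump i k.
Proof.
rewrite /skip /bump; case: (Nat.ltb_spec k i) => H.
- have -> : (i <= k)%N = false by apply/negbTE; rewrite -ltnNge; apply/ltP.
  by [].
- have -> : (i <= k)%N = true by apply/leP.
  by rewrite add1n.
Qed.

Lemma minor_mx m (M : mat) (i j : 'I_m.+1) :
  row' i (col' j (mx m.+1 M)) = mx m (minor M i j).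
Proof. by apply/matrixP => a b; rewrite !mxE /minor !skip_bump. Qed.

Lemma det_mx n M : det n M = \det (mx n M).
Proof.
elim: n M => [|m IH] M.
  by rewrite det_mx00.
cbn [det].
rewrite (expand_det_row _ ord0) rsum_big; apply: eq_bigr => j _.
rewrite /cofactor minor_mx -IH !mxE /= add0n RpowE.
rewrite !RmultE -RoppE. by rewrite mulrCA mulrA. 
Qed.

Ltac rstd := rewrite ?RplusE ?RmultE ?RminusE ?RoppE ?RinvE ?RdivE ?R0E ?R1E.

Lemma mx_adj n M : mx n (adj n M) = \adj (mx n M).
Proof.
case: n => [|m]; first by apply/matrixP => [[]].
apply/matrixP => i j; rewrite !mxE /cofactor /adj /= minor_mx -det_mx RpowE addnC.
by rstd.
Qed.

Lemma mx_inv n M : det n M <> 0%R -> mx n (inv n M) = invmx (mx n M).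
Proof.
move=> H; rewrite /invmx unitmxE unitfE -det_mx.
have -> : (det n M != 0) = true by apply/eqP.
apply/matrixP => i j; rewrite !mxE.
have := mx_adj n M => /matrixP /(_ i j); rewrite !mxE => <-.
rewrite /inv; rstd; by rewrite mulrC.
Qed.

Lemma mx_mm n X Y : mx n (mm n X Y) = mx n X *m mx n Y.
Proof. apply/matrixP => i j; rewrite !mxE /mm rsum_big; apply: eq_bigr => k _; by rewrite !mxE. Qed.

Lemma mx_transp n X : mx n (transp X) = (mx n X)^T.
Proof. by apply/matrixP => i j; rewrite !mxE. Qed.

Lemma mx_eqP n X Y : mx n X = mx n Y -> forall i j, (i < n)%N -> (j < n)%N -> X i j = Y i j.
Proof. move=> H i j hi hj; move/matrixP: H => /(_ (Ordinal hi) (Ordinal hj)). by rewrite !mxE. Qed.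

Definition rowrep (X : mat) (k : nat) (Y : mat) : mat :=
  fun i j => if Nat.eqb i k then Y i j else X i j.

Lemma det_rowrep n X k Y : (k < n)%N ->
  det n (rowrep X k Y) = rsum n (fun j => (Y k j * adj n X j k)%R).
Proof.
move=> hk; rewrite det_mx (expand_det_row _ (Ordinal hk)) rsum_big.
apply: eq_bigr => j _.
have -> : mx n (rowrep X k Y) (Ordinal hk) j = Y k j.
  by rewrite mxE /rowrep Nat.eqb_refl.
congr (_ * _).
rewrite -[adj n X j k]/(adj n X (Ordinal (ltn_ord j)) (Ordinal hk)) .
have := mx_adj n X => /matrixP /(_ j (Ordinal hk)); rewrite mxE => ->.
rewrite mxE /cofactor; congr (_ * \det _).
apply/matrixP => a b; rewrite !mxE /rowrep.
case: (Nat.eqb_spec (lift (Ordinal hk) a) k) => // E.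
exfalso; apply: (negP (neq_lift (Ordinal hk) a)); apply/eqP; apply: val_inj; exact: (esym E).
Qed.

Local Close Scope ring_scope. Local Open Scope R_scope.
Local Close Scope ring_scope.
Local Open Scope R_scope.

Lemma D_ext f g x l : (forall s, f s = g s) -> derivable_pt_lim f x l -> derivable_pt_lim g x l.
Proof. move=> H; have -> : g = f by apply: functional_extensionality => s; rewrite H. done. Qed.

Lemma D_eq f x l l' : l = l' -> derivable_pt_lim f x l -> derivable_pt_lim f x l'.
Proof. by move=> ->. Qed.

Lemma D_const c x : derivable_pt_lim (fun _ => c) x 0.
Proof. exact: derivable_pt_lim_const. Qed.

Lemma D_plus f g f' g' x : derivable_pt_lim f x f' -> derivable_pt_lim g x g' ->
  derivable_pt_lim (fun s => f s + g s) x (f' + g').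
Proof. move=> H1 H2; exact: (derivable_pt_lim_plus _ _ _ _ _ H1 H2). Qed.

Lemma D_minus f g f' g' x : derivable_pt_lim f x f' -> derivable_pt_lim g x g' ->
  derivable_pt_lim (fun s => f s - g s) x (f' - g').
Proof. move=> H1 H2; exact: (derivable_pt_lim_minus _ _ _ _ _ H1 H2). Qed.

Lemma D_opp f f' x : derivable_pt_lim f x f' -> derivable_pt_lim (fun s => - f s) x (- f').
Proof. move=> H1; exact: (derivable_pt_lim_opp _ _ _ H1). Qed.

Lemma D_mul f g f' g' x : derivable_pt_lim f x f' -> derivable_pt_lim g x g' ->
  derivable_pt_lim (fun s => f s * g s) x (f' * g x + f x * g').
Proof. move=> H1 H2; exact: (derivable_pt_lim_mult _ _ _ _ _ H1 H2). Qed.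

Lemma D_scal c f f' x : derivable_pt_lim f x f' -> derivable_pt_lim (fun s => c * f s) x (c * f').
Proof. move=> H; apply: D_eq (D_mul _ _ _ _ _ (D_const c x) H); ring. Qed.

Lemma D_rsum n (f : nat -> R -> R) f' x :
  (forall k, (k < n)%nat -> derivable_pt_lim (f k) x (f' k)) ->
  derivable_pt_lim (fun s => rsum n (fun k => f k s)) x (rsum n f').
Proof.
elim: n => [|n IH] H /=; first exact: D_const.
apply: D_plus; first by apply: IH => k hk; apply: H; lia.
apply: H; lia.
Qed.

Lemma rsum_ext n f g : (forall k, (k < n)%nat -> f k = g k) -> rsum n f = rsum n g.
Proof. elim: n => [|n IH] H //=; rewrite IH ?H //; move=> *; apply: H; lia. Qed.

Lemma rsum_plus n f g : rsum n (fun k => f k + g k) = rsum n f + rsum n g.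
Proof. elim: n => [|n IH] /=; [ring| rewrite IH; ring]. Qed.

Lemma rsum_minus n f g : rsum n (fun k => f k - g k) = rsum n f - rsum n g.
Proof. elim: n => [|n IH] /=; [ring| rewrite IH; ring]. Qed.

Lemma rsum_scal n c f : rsum n (fun k => c * f k) = c * rsum n f.
Proof. elim: n => [|n IH] /=; [ring| rewrite IH; ring]. Qed.

Lemma rsum_zero n : rsum n (fun _ => 0) = 0.
Proof. elim: n => [|n IH] /=; [ring| rewrite IH; ring]. Qed.

Lemma rsum_swap n m (f : nat -> nat -> R) :
  rsum n (fun i => rsum m (fun j => f i j)) = rsum m (fun j => rsum n (fun i => f i j)).
Proof.
elim: n => [|n IH] /=; first by rewrite rsum_zero.
by rewrite IH -rsum_plus.
Qed.

Lemma rsum_S0 m f : rsum (S m) f = f O + rsum m (fun k => f (S k)).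
Proof. elim: m => [|m IH] /=; first ring. rewrite /= in IH; rewrite IH; ring. Qed.

Lemma rsum_delta n f i : (i < n)%nat ->
  rsum n (fun j => f j * (if Nat.eqb j i then 1 else 0)) = f i.
Proof.
elim: n => [|n IH] hi /=; first lia.
case: (Nat.eqb_spec n i) => E.
- subst; rewrite (rsum_ext _ _ (fun _ => 0)) ?rsum_zero; first ring.
  move=> k hk; case: (Nat.eqb_spec k i) => E; [lia|ring].
- rewrite IH; [ring|lia].
Qed.

Lemma rsum_delta' n f i : (i < n)%nat ->
  rsum n (fun j => (if Nat.eqb i j then 1 else 0) * f j) = f i.
Proof.
move=> hi; rewrite -(rsum_delta n f i hi); apply: rsum_ext => k _.
rewrite Nat.eqb_sym; ring.
Qed.

Definition Dm n (F : R -> mat) (F' : mat) (x : R) : Prop :=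
  forall i j, (i < n)%nat -> (j < n)%nat -> derivable_pt_lim (fun s => F s i j) x (F' i j).

Lemma skip_lt m i a : (a < m)%nat -> (skip i a < S m)%nat.
Proof. rewrite /skip; case: (Nat.ltb_spec a i); lia. Qed.

Lemma Dm_minor m F F' x i j : Dm (S m) F F' x ->
  Dm m (fun s => minor (F s) i j) (minor F' i j) x.
Proof. move=> H a b ha hb; apply: H; exact: skip_lt. Qed.

Lemma D_det n : forall F F' x, Dm n F F' x ->
  derivable_pt_lim (fun s => det n (F s)) x (rsum n (fun k => det n (rowrep (F x) k F'))).
Proof.
elim: n => [|m IH] F F' x H.
  exact: D_const.
have Hj : forall j, (j < S m)%nat -> derivable_pt_lim
   (fun s => (-1)^j * F s 0%nat j * det m (minor (F s) 0 j)) x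
   ((-1)^j * F' 0%nat j * det m (minor (F x) 0 j) +
    (-1)^j * F x 0%nat j * rsum m (fun k => det m (rowrep (minor (F x) 0 j) k (minor F' 0 j)))).
  move=> j hj.
  apply: D_eq (D_mul _ _ _ _ _ (D_scal ((-1)^j) _ _ _ (H 0%nat j ltac:(lia) hj))
                 (IH _ _ _ (Dm_minor _ _ _ _ 0%nat j H))); ring.
apply: D_eq (D_rsum (S m) _ _ x Hj).
rewrite (rsum_S0 m (fun k => det (S m) (rowrep (F x) k F'))).
rewrite rsum_plus.
have -> : det (S m) (rowrep (F x) 0 F') =
   rsum (S m) (fun j => (-1)^j * F' 0%nat j * det m (minor (F x) 0 j)) by [].
congr (_ + _).
rewrite [RHS](rsum_ext _ _ (fun k => rsum (S m) (fun j => (-1)^j * F x 0%nat j * det m (rowrep (minor (F x) 0 j) k (minor F' 0 j))))) //.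
rewrite rsum_swap; apply: rsum_ext => j _; by rewrite rsum_scal.
Qed.

Local Close Scope ring_scope. Local Open Scope R_scope.
Local Close Scope ring_scope.
Local Open Scope R_scope.

Definition delta (i j : nat) : R := if Nat.eqb i j then 1 else 0.

Lemma mx_scalar n c : mx n (fun i j => c * delta i j) = (c%:M)%R.
Proof.
apply/matrixP => i j; rewrite !mxE /delta.
case: (Nat.eqb_spec i j) => E.
- have -> : i = j by apply: val_inj. rewrite eqxx /=; rstd; by rewrite GRing.mulr1.
- have -> : (i == j) = false by apply/negbTE/eqP => E'; apply: E; rewrite E'.
  rstd; by rewrite GRing.mulr0.
Qed.

Lemma adj_id n X i j : (i < n)%nat -> (j < n)%nat ->
  mm n (adj n X) X i j = det n X * delta i j.
Proof.
move=> hi hj; apply: (mx_eqP n (mm n (adj n X) X) (fun i j => det n X * delta i j)) => //.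
by rewrite mx_mm mx_adj mul_adj_mx mx_scalar det_mx.
Qed.

Lemma Dm_mm n F G F' G' x : Dm n F F' x -> Dm n G G' x ->
  Dm n (fun s => mm n (F s) (G s)) (fun i j => mm n F' (G x) i j + mm n (F x) G' i j) x.
Proof.
move=> HF HG i j hi hj; rewrite /mm -rsum_plus.
apply: D_rsum => k hk; apply: D_mul; [exact: HF | exact: HG].
Qed.

Lemma Dm_transp n F F' x : Dm n F F' x -> Dm n (fun s => transp (F s)) (transp F') x.
Proof. move=> H i j hi hj; exact: H. Qed.

Definition AdjD n (F : R -> mat) (F' : mat) x : mat := fun i j =>
  (-1)^(i+j) * rsum (Nat.pred n) (fun k => det (Nat.pred n) (rowrep (minor (F x) j i) k (minor F' j i))).

Lemma Dm_adj n F F' x : Dm n F F' x -> Dm n (fun s => adj n (F s)) (AdjD n F F' x) x.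
Proof.
case: n => [|m] H i j hi hj; first lia.
apply: D_scal; apply: D_det; exact: Dm_minor.
Qed.

Definition detD n (F : R -> mat) (F' : mat) x : R := rsum n (fun k => det n (rowrep (F x) k F')).

Lemma adjD_key n F F' x : Dm n F F' x -> forall i j, (i < n)%nat -> (j < n)%nat ->
  rsum n (fun k => AdjD n F F' x i k * F x k j + adj n (F x) i k * F' k j) =
  detD n F F' x * delta i j.
Proof.
move=> H i j hi hj.
have H1 := Dm_mm _ _ _ _ _ _ (Dm_adj _ _ _ _ H) H i j hi hj.
have H2 : derivable_pt_lim (fun s => mm n (adj n (F s)) (F s) i j) x (detD n F F' x * delta i j).
  apply: (D_ext (fun s => det n (F s) * delta i j)).
    by move=> s; rewrite adj_id.
  apply: D_eq (D_mul _ _ _ _ _ (D_det _ _ _ _ H) (D_const (delta i j) x)); rewrite /detD; ring.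
rewrite -(uniqueness_limite _ _ _ _ H1 H2) /mm -rsum_plus //.
Qed.

Module M_A4.
From mathcomp Require Import ring.
Local Close Scope ring_scope. Local Open Scope R_scope.

Section Alg.
Local Open Scope ring_scope.
Lemma inv_deriv_alg n (Xm Km Pm : 'M[R]_n) (d' : R) : \det Xm != 0 ->
  Km *m Xm + \adj Xm *m Pm = d'%:M ->
  (\det Xm)^-1 *: Km - (d' / (\det Xm * \det Xm)) *: \adj Xm = - (invmx Xm *m Pm *m invmx Xm).
Proof.
move=> hd key.
have hu : Xm \in unitmx by rewrite unitmxE unitfE.
set d := \det Xm; set iX := invmx Xm.
have hA : \adj Xm = d *: iX.
  by rewrite /iX /invmx hu scalerA mulfV // scale1r.
have hK : Km = d' *: iX - d *: (iX *m Pm *m iX).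
  rewrite -(mulmxK hu Km).
  have -> : Km *m Xm = d'%:M - \adj Xm *m Pm by rewrite -key addrK.
  by rewrite mulmxBl mul_scalar_mx hA -scalemxAl -scalemxAl.
rewrite hK hA !scalerBr !scalerA.
have -> : d^-1 * d = 1 by rewrite mulVf.
have -> : d' / (d * d) * d = d^-1 * d'.
  by field.
rewrite scale1r; set Y := iX *m Pm *m iX.
by rewrite addrAC subrr add0r.
Qed.
End Alg.

Local Close Scope ring_scope.
Local Open Scope R_scope.

Lemma Dm_inv n F F' x : Dm n F F' x -> det n (F x) <> 0 ->
  Dm n (fun s => inv n (F s)) (fun i j => - mm n (mm n (inv n (F x)) F') (inv n (F x)) i j) x.
Proof.
move=> H hd i j hi hj.
have HA := Dm_adj _ _ _ _ H i j hi hj.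
have HD := D_det _ _ _ _ H.
have HQ := derivable_pt_lim_div _ _ _ _ _ HA HD hd.
apply: D_eq HQ.
have key : (mx n (AdjD n F F' x) *m mx n (F x) + \adj (mx n (F x)) *m mx n F' = (detD n F F' x)%:M)%R.
  rewrite -mx_adj -!mx_mm -mx_scalar; apply/matrixP => a b; rewrite !mxE. rewrite -RplusE.
  rewrite /mm -rsum_plus; exact: adjD_key.
have hdm : (\det (mx n (F x)) != 0)%R by rewrite -det_mx; apply/eqP.
have M := inv_deriv_alg _ _ _ _ _ hdm key.
rewrite -(mx_inv _ _ hd) -!mx_mm -mx_adj -det_mx in M.
move/matrixP: M => /(_ (Ordinal hi) (Ordinal hj)); rewrite !mxE /= => M.
rewrite RoppE -M /Rsqr; rstd; rewrite /detD; field.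
by apply/eqP.
Qed.

End M_A4.
Import M_A4.
Module M_A5.
From mathcomp Require Import ring.
Local Close Scope ring_scope. Local Open Scope R_scope.

Section Alg2.
Local Open Scope ring_scope.
Lemma key_alg n (a a1 a2 r : 'M[R]_n) : a \in unitmx ->
  a1^T *m a = a^T *m a1 -> a2 = - (r *m a) -> r^T = r ->
  let S := a1 *m invmx a in
  let B := invmx a^T in
  let B1 := - (B *m a1^T *m B) in
  let B2 := - ((B1 *m a1^T + B *m a2^T) *m B + (B *m a1^T) *m B1) in
  [/\ S^T = S, B *m a^T = 1%:M, B1 *m a^T = - S & B2 *m a^T = (S *m S) *+ 2 + r].
Proof.
move=> hu hL hJ hr S B B1 B2.
have hut : a^T \in unitmx by rewrite unitmx_tr.
have hB : B *m a^T = 1%:M by rewrite /B mulVmx.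
have hST : S^T = S.
  rewrite /S trmx_mul trmx_inv.
  rewrite -[LHS](mulmxK hu); congr (_ *m _).
  by rewrite -mulmxA hL mulmxA mulVmx // mul1mx.
have hS : B *m a1^T = S by rewrite -hST /S trmx_mul trmx_inv.
have h1 : B1 *m a^T = - S.
  by rewrite /B1 mulNmx -(mulmxA (B *m a1^T)) hB mulmx1 hS.
split => //.
have e1 : B1 *m a1^T = -(S *m S) by rewrite /B1 mulNmx -(mulmxA (B *m a1^T)) hS.
have e2 : B *m a2^T = - r.
  rewrite hJ -mulNmx trmx_mul mulmxA hB mul1mx.
  by rewrite linearN /= hr.
rewrite /B2 mulNmx mulmxDl -(mulmxA _ B) hB mulmx1 -(mulmxA (B *m a1^T)) h1 hS e1 e2 mulmxN.
by rewrite !opprD !opprK mulr2n addrAC addrC.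
Qed.
End Alg2.

Definition cv n (v : vec) : 'cV[R]_n := \col_(i < n) v i.

Lemma cv_mv n M v : cv n (mv n M v) = (mx n M *m cv n v)%R.
Proof. apply/matrixP => i j; rewrite !mxE /mv rsum_big; apply: eq_bigr => k _; by rewrite !mxE. Qed.

Lemma cv_eqP n u v : cv n u = cv n v -> forall i, (i < n)%N -> u i = v i.
Proof. move=> H i hi; move/matrixP: H => /(_ (Ordinal hi) ord0). by rewrite !mxE. Qed.

Lemma cv_ext n u v : (forall i, (i < n)%N -> u i = v i) -> cv n u = cv n v.
Proof. move=> H; apply/matrixP => i j; rewrite !mxE; exact: H. Qed.

Lemma mx_ext n X Y : (forall i j, (i < n)%N -> (j < n)%N -> X i j = Y i j) -> mx n X = mx n Y.
Proof. move=> H; apply/matrixP => i j; rewrite !mxE; exact: H. Qed.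

Lemma mx_add n X Y : mx n (fun i j => X i j + Y i j)%R = (mx n X + mx n Y)%R.
Proof. by apply/matrixP => i j; rewrite !mxE. Qed.

Lemma mx_opp n X : mx n (fun i j => - X i j)%R = (- mx n X)%R.
Proof. by apply/matrixP => i j; rewrite !mxE. Qed.

Lemma inner_cv n u v : inner n u v = ((cv n u)^T *m cv n v)%R ord0 ord0.
Proof. rewrite /inner rsum_big !mxE; apply: eq_bigr => k _; by rewrite !mxE. Qed.

Lemma mv_mm n X Y v i : (i < n)%N -> mv n (mm n X Y) v i = mv n X (mv n Y v) i.
Proof. apply: cv_eqP; by rewrite !cv_mv mx_mm mulmxA. Qed.

End M_A5.
Import M_A5.
Local Close Scope ring_scope. Local Open Scope R_scope.
Local Close Scope ring_scope.
Local Open Scope R_scope.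

Definition Dv n (V : R -> vec) (V' : vec) (x : R) : Prop :=
  forall i, (i < n)%nat -> derivable_pt_lim (fun s => V s i) x (V' i).

Lemma Dv_mv n F F' z x : Dm n F F' x -> Dv n (fun s => mv n (F s) z) (mv n F' z) x.
Proof. move=> H i hi; apply: D_rsum => k hk; apply: D_eq (D_mul _ _ _ _ _ (H i k hi hk) (D_const (z k) x)); ring. Qed.

Lemma D_inner n U V U' V' x : Dv n U U' x -> Dv n V V' x ->
  derivable_pt_lim (fun s => inner n (U s) (V s)) x (inner n U' (V x) + inner n (U x) V').
Proof. move=> HU HV; rewrite /inner -rsum_plus; apply: D_rsum => k hk; apply: D_mul; [exact: HU|exact: HV]. Qed.

Lemma Dm_opp n F F' x : Dm n F F' x -> Dm n (fun s i j => - F s i j) (fun i j => - F' i j) x.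
Proof. move=> H i j hi hj; apply: D_opp; exact: H. Qed.

Lemma inner_ext n u u' v v' : (forall i, (i < n)%nat -> u i = u' i) ->
  (forall i, (i < n)%nat -> v i = v' i) -> inner n u v = inner n u' v'.
Proof. move=> H1 H2; apply: rsum_ext => k hk; by rewrite H1 ?H2. Qed.

Lemma inner_sym n u v : inner n u v = inner n v u.
Proof. apply: rsum_ext => k _; ring. Qed.

Lemma inner_lin_l n p (c : nat -> R) (v : nat -> vec) y :
  inner n (fun k => rsum p (fun j => c j * v j k)) y = rsum p (fun j => c j * inner n (v j) y).
Proof.
rewrite /inner (rsum_ext _ _ (fun k => rsum p (fun j => c j * v j k * y k))).
  rewrite rsum_swap; apply: rsum_ext => j _; rewrite -rsum_scal; apply: rsum_ext => k _; ring.
move=> k _; rewrite Rmult_comm -rsum_scal; apply: rsum_ext => j _; ring.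
Qed.

Lemma inner_minus_l n u v y : inner n (fun k => u k - v k) y = inner n u y - inner n v y.
Proof. rewrite /inner -rsum_minus; apply: rsum_ext => k _; ring. Qed.

Lemma inner_sym_mat n S x y : (forall i j, (i < n)%nat -> (j < n)%nat -> S i j = S j i) ->
  inner n (mv n S x) y = inner n x (mv n S y).
Proof.
move=> H; rewrite /inner /mv.
rewrite (rsum_ext _ _ (fun i => rsum n (fun k => S i k * x k * y i))); last first.
  by move=> i _; rewrite Rmult_comm -rsum_scal; apply: rsum_ext => k _; ring.
rewrite rsum_swap; apply: rsum_ext => k hk.
rewrite -rsum_scal; apply: rsum_ext => i hi; rewrite H //; ring.
Qed.

Lemma D_pos f x l : derivable_pt_lim f x l -> 0 < f x ->
  exists d, 0 < d /\ forall s, Rabs (s - x) < d -> 0 < f s.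
Proof.
move=> H hp.
have HC : continuity_pt f x := derivable_continuous_pt f x (exist _ l H).
have [alp [ha Ha]] := HC (f x) hp.
exists alp; split => // s hs.
case: (Req_dec s x) => [->|ne] //.
have hh : R_dist (f s) (f x) < f x.
  apply: Ha; split; [split; [exact: I | exact: (not_eq_sym ne)] | exact: hs].
rewrite /R_dist /= in hh.
move: hh; rewrite /Rabs; case: Rcase_abs => ?; lra.
Qed.

Lemma D_ne0 f x l : derivable_pt_lim f x l -> f x <> 0 ->
  exists d, 0 < d /\ forall s, Rabs (s - x) < d -> f s <> 0.
Proof.
move=> H hn; case: (Rlt_le_dec 0 (f x)) => hs.
- have [d [hd Hd]] := D_pos _ _ _ H hs; exists d; split => // s /Hd; lra.
- have H' := D_opp _ _ _ H.
  have [d [hd Hd]] := D_pos _ _ _ H' ltac:(lra); exists d; split => // s /Hd; lra.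
Qed.

Local Close Scope ring_scope. Local Open Scope R_scope.
Local Close Scope ring_scope.
Local Open Scope R_scope.

Lemma orth_delta n p w i j : orthonormal n p w -> (i < p)%nat -> (j < p)%nat ->
  inner n (w i) (w j) = delta i j.
Proof. move=> H hi hj; rewrite H //; apply/ltP => //; apply/ltP => //. Qed.

Lemma proj_inner_gen n p w x y :
  inner n (proj n p w x) y = rsum p (fun j => inner n x (w j) * inner n (w j) y).
Proof. by rewrite /proj inner_lin_l. Qed.

Lemma proj_inner n p w x i : orthonormal n p w -> (i < p)%nat ->
  inner n (proj n p w x) (w i) = inner n x (w i).
Proof.
move=> H hi; rewrite proj_inner_gen.
rewrite (rsum_ext _ _ (fun j => inner n x (w j) * delta j i)).
  exact: rsum_delta.
by move=> j hj; rewrite (orth_delta n p).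
Qed.

Definition sig n (S : mat) (w : nat -> vec) i j := inner n (mv n S (w i)) (w j).

Lemma trS1_eq n p w S : orthonormal n p w ->
  trS1 n p w S = rsum p (fun i => sig n S w i i).
Proof. move=> H; apply: rsum_ext => i hi; rewrite /S1op proj_inner //. Qed.

Lemma trS1sq_eq n p w S : orthonormal n p w ->
  (forall i j, (i < n)%nat -> (j < n)%nat -> S i j = S j i) ->
  trS1sq n p w S = rsum p (fun i => rsum p (fun j => sig n S w i j * sig n S w i j)).
Proof.
move=> H HS; apply: rsum_ext => i hi; rewrite /S1op proj_inner //.
rewrite inner_sym_mat // proj_inner_gen; apply: rsum_ext => j hj.
by rewrite /sig (inner_sym n (w j)).
Qed.

Lemma inner_res n p w x : orthonormal n p w ->
  inner n (fun k => x k - proj n p w x k) (fun k => x k - proj n p w x k) =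
  inner n x x - rsum p (fun j => inner n x (w j) * inner n x (w j)).
Proof.
move=> H.
have E1 : inner n (proj n p w x) x = rsum p (fun j => inner n x (w j) * inner n x (w j)).
  by rewrite proj_inner_gen; apply: rsum_ext => j _; rewrite (inner_sym n (w j)).
have E2 : inner n (proj n p w x) (proj n p w x) = rsum p (fun j => inner n x (w j) * inner n x (w j)).
  rewrite proj_inner_gen; apply: rsum_ext => j hj.
  by rewrite (inner_sym n (w j) (proj n p w x)) proj_inner.
have E3 : inner n x (proj n p w x) = rsum p (fun j => inner n x (w j) * inner n x (w j)).
  by rewrite inner_sym.
rewrite inner_minus_l (inner_sym n x) (inner_sym n (proj n p w x)) !inner_minus_l E1 E2 E3; ring.
Qed.

Lemma trS2_eq n p w S : orthonormal n p w ->
  trS2TS2 n p w S = rsum p (fun i => inner n (mv n S (w i)) (mv n S (w i))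
      - rsum p (fun j => sig n S w i j * sig n S w i j)).
Proof.
move=> H; apply: rsum_ext => i hi; rewrite /S2op inner_res //.
Qed.

Local Close Scope ring_scope. Local Open Scope R_scope.
Local Close Scope ring_scope.
Local Open Scope R_scope.

Lemma inner_opp_l n u v : inner n (fun k => - u k) v = - inner n u v.
Proof. rewrite /inner (rsum_ext _ _ (fun k => (-1) * (u k * v k))); first by rewrite rsum_scal; ring. move=> k _; ring. Qed.

Lemma det_transp n X : det n (transp X) = det n X.
Proof. by rewrite !det_mx mx_transp det_tr. Qed.

Lemma choice_fun p (P : nat -> (nat -> R) -> Prop) :
  (forall j, (j < p)%nat -> exists c, P j c) -> exists G : nat -> nat -> R, forall j, (j < p)%nat -> P j (G j).
Proof.
move=> H.
have H' : forall j, exists c, (j < p)%nat -> P j c.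
  move=> j; case: (ltnP j p) => hj.
  - have [c hc] := H j hj; by exists c.
  - by exists (fun _ => 0) => hj'; lia.
exists (fun j => proj1_sig (constructive_indefinite_description _ (H' j))).
move=> j hj; exact: (proj2_sig (constructive_indefinite_description _ (H' j)) hj).
Qed.

Lemma mv_unit n M j i : (j < n)%N -> mv n M (fun k => delta k j) i = M i j.
Proof. move=> hj; rewrite /mv; exact: rsum_delta. Qed.

Lemma lagrange_mx n A A1 :
  (forall v u : vec, inner n (mv n A1 v) (mv n A u) = inner n (mv n A v) (mv n A1 u)) ->
  ((mx n A1)^T *m mx n A = (mx n A)^T *m mx n A1)%R.
Proof.
move=> H; rewrite -!mx_transp -!mx_mm; apply: mx_ext => j i hj hi.
have E : forall (P Q : mat), mm n (transp P) Q j i = inner n (mv n P (fun k => delta k j)) (mv n Q (fun k => delta k i)).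
  move=> P Q; apply: rsum_ext => k hk; by rewrite !mv_unit.
by rewrite !E H.
Qed.

Definition madd (X Y : mat) : mat := fun i j => X i j + Y i j.
Definition mopp (X : mat) : mat := fun i j => - X i j.
Lemma mx_madd n X Y : mx n (madd X Y) = (mx n X + mx n Y)%R.
Proof. by apply/matrixP => i j; rewrite !mxE. Qed.
Lemma mx_mopp n X : mx n (mopp X) = (- mx n X)%R.
Proof. by apply/matrixP => i j; rewrite !mxE. Qed.
Lemma cv_opp n (x : vec) : cv n (fun i => - x i) = (- cv n x)%R.
Proof. by apply/matrixP => i j; rewrite !mxE. Qed.
Lemma cv_2add n (x y : vec) : cv n (fun i => 2 * x i + y i) = (cv n x *+ 2 + cv n y)%R.
Proof. apply/matrixP => i j; rewrite !mxE. have E : forall u v : R, 2 * u + v = Rplus (Rplus u u) v by move=> *; ring. exact: E. Qed.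
Lemma inner_2add_l n (x y v : vec) : inner n (fun i => 2 * x i + y i) v = 2 * inner n x v + inner n y v.
Proof.
rewrite /inner -rsum_scal -rsum_plus; apply: rsum_ext => k _; ring.
Qed.
Lemma mv_ext n M (x y : vec) i : (forall k, (k < n)%N -> x k = y k) -> mv n M x i = mv n M y i.
Proof. move=> H; apply: rsum_ext => k hk; by rewrite H. Qed.

Lemma mv_lin n p M (c : nat -> R) (x : nat -> vec) i :
  mv n M (fun k => rsum p (fun m => c m * x m k)) i = rsum p (fun m => c m * mv n M (x m) i).
Proof.
rewrite /mv (rsum_ext _ _ (fun k => rsum p (fun m => c m * (M i k * x m k)))).
  by rewrite rsum_swap; apply: rsum_ext => m _; rewrite rsum_scal.
move=> k _; rewrite -rsum_scal; apply: rsum_ext => m _; ring.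
Qed.

Lemma gram_expand n p (G : nat -> nat -> R) (v u : nat -> vec) (i l : nat) :
  (forall k, (k < n)%N -> v i k = rsum p (fun m => G i m * u m k)) ->
  (forall k, (k < n)%N -> v l k = rsum p (fun m => G l m * u m k)) ->
  inner n (v i) (v l) = mm p (mm p G (fun a b => inner n (u a) (u b))) (transp G) i l.
Proof.
move=> Hi Hl.
rewrite (inner_ext n (v i) (fun k => rsum p (fun m => G i m * u m k)) (v l) (fun k => rsum p (fun m => G l m * u m k))) //.
rewrite inner_lin_l /mm /transp.
rewrite (rsum_ext _ _ (fun m => rsum p (fun q => G i m * inner n (u m) (u q) * G l q))).
  by rewrite rsum_swap; apply: rsum_ext => q _; rewrite Rmult_comm -rsum_scal; apply: rsum_ext => m _; ring.
move=> m _; rewrite inner_sym inner_lin_l -rsum_scal; apply: rsum_ext => q _; rewrite inner_sym; ring.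
Qed.
Section M3.
Local Open Scope ring_scope.
Lemma mul3 (x y : R) : x * y * x = x * x * y.
Proof. by rewrite mulrAC. Qed.
End M3.

Local Close Scope ring_scope. Local Open Scope R_scope.
Local Close Scope ring_scope.
Local Open Scope R_scope.

Theorem main
  (n p : nat) (a b t0 : R) (A A1 A2 Rc : R -> mat) (e w : nat -> vec) (t : R) :
  a < t0 < b ->
  (forall s, a < s < b -> forall i j, (i < n)%coq_nat -> (j < n)%coq_nat ->
     derivable_pt_lim (fun u => A u i j) s (A1 s i j) /\
     derivable_pt_lim (fun u => A1 u i j) s (A2 s i j)) ->
  (forall s, a < s < b -> forall i j, (i < n)%coq_nat -> (j < n)%coq_nat ->
     Rc s i j = Rc s j i) ->
  (forall s, a < s < b -> forall i j, (i < n)%coq_nat -> (j < n)%coq_nat ->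
     A2 s i j + mm n (Rc s) (A s) i j = 0) ->
  (forall v : vec,
     (forall i, (i < n)%coq_nat -> mv n (A t0) v i = 0 /\ mv n (A1 t0) v i = 0) ->
     forall i, (i < n)%coq_nat -> v i = 0) ->
  (forall s, a < s < b -> forall v u : vec,
     inner n (mv n (A1 s) v) (mv n (A s) u) = inner n (mv n (A s) v) (mv n (A1 s) u)) ->
  ((1 <= p)%coq_nat /\ (p <= n)%coq_nat) ->
  orthonormal n p e ->
  a < t < b -> det n (A t) <> 0 ->
  orthonormal n p w ->
  (forall i, (i < p)%coq_nat -> in_span n p (fun j => mv n (Ainvstar n A t) (e j)) (w i)) ->
  (forall j, (j < p)%coq_nat -> in_span n p w (mv n (Ainvstar n A t) (e j))) ->
  exists (delta : R) (g1 : R -> R) (g2 : R),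
    0 < delta /\
    (forall s, Rabs (s - t) < delta -> derivable_pt_lim (gW n p A e) s (g1 s)) /\
    derivable_pt_lim g1 t g2 /\
    INR p * (g2 / gW n p A e t) =
      / INR p * (trS1 n p w (Sop n A A1 t)) ^ 2
      - trS1sq n p w (Sop n A A1 t)
      - 3 * trS2TS2 n p w (Sop n A A1 t)
      - rsum p (fun i => inner n (mv n (Rc t) (w i)) (w i)).
Proof.
move=> _ HD HRs HJ _ HL [hp1 hpn] He [hta htb] hdet Hw Hsp1 Hsp2.
have hp1' : (0 < p)%N by apply/ltP.
have HA : forall s, a < s < b -> Dm n A (A1 s) s /\ Dm n A1 (A2 s) s.
  by move=> s hs; split => i j /ltP hi /ltP hj; have [? ?] := HD s hs i j hi hj.
pose X s := transp (A s).
pose B s := inv n (X s).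
pose B1 s := mopp (mm n (mm n (B s) (transp (A1 s))) (B s)).
have HB : forall s, a < s < b -> det n (A s) <> 0 -> Dm n B (B1 s) s.
  move=> s hs hd; apply: (Dm_inv n X (transp (A1 s))).
    exact: Dm_transp (proj1 (HA s hs)).
  by rewrite /X det_transp.
have hts : a < t < b by split.
pose B2 := mopp (madd (mm n (madd (mm n (B1 t) (transp (A1 t))) (mm n (B t) (transp (A2 t)))) (B t)) (mm n (mm n (B t) (transp (A1 t))) (B1 t))).
have HBt := HB t hts hdet.
have HB1 : Dm n B1 B2 t.
  apply: (Dm_opp n (fun s => mm n (mm n (B s) (transp (A1 s))) (B s))).
  apply: Dm_mm => //; apply: Dm_mm => //; exact: Dm_transp (proj2 (HA t hts)).
pose z k := mv n (transp (A t)) (w k).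
pose u s k := mv n (B s) (z k).
pose u1 s k := mv n (B1 s) (z k).
pose u2 k := mv n B2 (z k).
pose N s := fun i j => inner n (u s i) (u s j).
pose N1 s := fun i j => inner n (u1 s i) (u s j) + inner n (u s i) (u1 s j).
pose N2 := fun i j => (inner n (u2 i) (u t j) + inner n (u1 t i) (u1 t j)) + (inner n (u1 t i) (u1 t j) + inner n (u t i) (u2 j)).
have HN : forall s, a < s < b -> det n (A s) <> 0 -> Dm p N (N1 s) s.
  move=> s hs hd i j _ _; apply: D_inner; exact: Dv_mv (HB s hs hd).
have HN1 : Dm p N1 N2 t.
  move=> i j _ _; apply: D_plus; apply: D_inner; exact: Dv_mv.
pose h s := det p (N s).
pose h1 s := rsum p (fun k => rsum p (fun j => N1 s k j * adj p (N s) j k)).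
have Hh : forall s, a < s < b -> det n (A s) <> 0 -> derivable_pt_lim h s (h1 s).
  move=> s hs hd; apply: D_eq (D_det _ _ _ _ (HN s hs hd)).
  by apply: rsum_ext => k hk; rewrite det_rowrep.
pose h2 := rsum p (fun k => rsum p (fun j => N2 k j * adj p (N t) j k + N1 t k j * AdjD p N (N1 t) t j k)).
have Hh1 : derivable_pt_lim h1 t h2.
  apply: D_rsum => k hk; apply: D_rsum => j hj; apply: D_mul.
    exact: HN1.
  exact: (Dm_adj _ _ _ _ (HN t hts hdet)).
have hdm : (\det (mx n (A t)) != 0)%R by rewrite -det_mx; apply/eqP.
have hu : (mx n (A t) \in unitmx)%R by rewrite unitmxE unitfE.
have hLm := lagrange_mx n (A t) (A1 t) (HL t hts).
have hJm : mx n (A2 t) = (- (mx n (Rc t) *m mx n (A t)))%R.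
  rewrite -mx_mm -mx_opp; apply: mx_ext => i j hi hj.
  have E := HJ t hts i j (elimT ltP hi) (elimT ltP hj).
  have E2 : A2 t i j = Ropp (mm n (Rc t) (A t) i j) by lra.
  exact: E2.
have hrm : ((mx n (Rc t))^T = mx n (Rc t))%R.
  rewrite -mx_transp; apply: mx_ext => i j hi hj; rewrite /transp; apply: HRs => //; exact/ltP.
have [hST hBa h1a h2a] := key_alg _ _ _ _ _ hu hLm hJm hrm.
have hdX : det n (X t) <> 0 by rewrite /X det_transp.
have eS : mx n (Sop n A A1 t) = (mx n (A1 t) *m invmx (mx n (A t)))%R.
  by rewrite /Sop mx_mm mx_inv.
have eB : mx n (B t) = invmx (mx n (A t))^T by rewrite /B mx_inv // mx_transp.
have eB1 : mx n (B1 t) = (- (invmx (mx n (A t))^T *m (mx n (A1 t))^T *m invmx (mx n (A t))^T))%R.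
  by rewrite /B1 mx_mopp !mx_mm eB (mx_transp n (A1 t)).
have eB2 : mx n B2 = (- ((mx n (B1 t) *m (mx n (A1 t))^T + invmx (mx n (A t))^T *m (mx n (A2 t))^T) *m invmx (mx n (A t))^T + (invmx (mx n (A t))^T *m (mx n (A1 t))^T) *m mx n (B1 t)))%R.
  by rewrite /B2 mx_mopp mx_madd (mx_mm n (madd _ _)) mx_madd (mx_mm n (B1 t)) (mx_mm n (B t) (transp (A2 t))) (mx_mm n (mm n (B t) (transp (A1 t)))) (mx_mm n (B t) (transp (A1 t))) (mx_transp n (A1 t)) (mx_transp n (A2 t)) eB.
rewrite -eB1 in h1a h2a; rewrite -eB2 in h2a; rewrite -eS in hST h1a h2a.
set Sm := Sop n A A1 t in hST h1a h2a eS *.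
have V1 : forall k i, (i < n)%N -> u t k i = w k i.
  move=> k i; apply: cv_eqP.
  by rewrite /u /z (cv_mv n (B t)) (cv_mv n (transp (A t))) mulmxA eB (mx_transp n (A t)) hBa mul1mx.
have V2 : forall k i, (i < n)%N -> u1 t k i = - mv n Sm (w k) i.
  move=> k i; apply: (cv_eqP n (u1 t k) (fun i => - mv n Sm (w k) i)).
  rewrite cv_opp /u1 /z (cv_mv n (B1 t)) (cv_mv n (transp (A t))) mulmxA (mx_transp n (A t)) h1a.
  by rewrite (cv_mv n Sm) mulNmx.
have V3 : forall k i, (i < n)%N -> u2 k i = 2 * mv n Sm (mv n Sm (w k)) i + mv n (Rc t) (w k) i.
  move=> k i; apply: (cv_eqP n (u2 k) (fun i => 2 * mv n Sm (mv n Sm (w k)) i + mv n (Rc t) (w k) i)).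
  rewrite cv_2add /u2 /z (cv_mv n B2) (cv_mv n (transp (A t))) mulmxA (mx_transp n (A t)) h2a.
  by rewrite (cv_mv n Sm) (cv_mv n Sm) (cv_mv n (Rc t)) !mulr2n !mulmxDl !mulmxA.
have Ssym : forall i j, (i < n)%N -> (j < n)%N -> Sm i j = Sm j i.
  move=> i j hi hj; apply: (mx_eqP n Sm (transp Sm)) => //.
  by rewrite (mx_transp n Sm) hST.
have hwp : forall i, (i < p)%N -> True by [].
have FN : forall i j, (i < p)%N -> (j < p)%N -> N t i j = delta i j.
  move=> i j hi hj; rewrite /N (inner_ext n (u t i) (w i) (u t j) (w j)) ?(orth_delta n p) //; exact: V1.
have mxN : mx p (N t) = 1%:M%R.
  rewrite -(mx_scalar p 1); apply: mx_ext => i0 j0 hi0 hj0; rewrite FN //; ring.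
have ht : h t = 1 by rewrite /h det_mx mxN det1.
have FA : forall j k, (j < p)%N -> (k < p)%N -> adj p (N t) j k = delta j k.
  move=> j k hj hk; rewrite -[delta j k]Rmult_1_l; apply: (mx_eqP p (adj p (N t)) (fun j k => 1 * delta j k)) => //.
  by rewrite mx_adj mxN adj1 mx_scalar.
have sigS : forall i j, sig n Sm w i j = sig n Sm w j i.
  by move=> i j; rewrite /sig inner_sym -inner_sym_mat.
have FN1 : forall k j, (k < p)%N -> (j < p)%N -> N1 t k j = -2 * sig n Sm w k j.
  move=> k j hk hj; rewrite /N1.
  have e1 : inner n (u1 t k) (u t j) = inner n (fun i => - mv n Sm (w k) i) (w j).
    by apply: inner_ext; [exact: V2 | exact: V1].
  have e2 : inner n (u t k) (u1 t j) = inner n (w k) (fun i => - mv n Sm (w j) i).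
    by apply: inner_ext; [exact: V1 | exact: V2].
  rewrite e1 e2 inner_opp_l (inner_sym n (w k)) inner_opp_l -/(sig n Sm w k j) -/(sig n Sm w j k) sigS; ring.
have Hh1t : h1 t = rsum p (fun k => N1 t k k).
  apply: rsum_ext => k hk; rewrite (rsum_ext _ _ (fun j => N1 t k j * delta j k)).
    exact: rsum_delta.
  by move=> j hj; rewrite FA.
have FAD : forall j k, (j < p)%N -> (k < p)%N -> AdjD p N (N1 t) t j k = h1 t * delta j k - N1 t j k.
  move=> j k hj hk.
  have K := adjD_key p N (N1 t) t (HN t hts hdet) j k hj hk.
  have E : detD p N (N1 t) t = h1 t by apply: rsum_ext => m hm; rewrite det_rowrep.
  rewrite E in K; rewrite -K.
  rewrite (rsum_ext _ _ (fun m => AdjD p N (N1 t) t j m * delta m k + delta j m * N1 t m k)).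
    rewrite rsum_plus rsum_delta // rsum_delta' //; ring.
  by move=> m hm; rewrite FN // FA.
pose Pk k := inner n (mv n Sm (w k)) (mv n Sm (w k)).
pose Rk k := inner n (mv n (Rc t) (w k)) (w k).
have FN2 : forall k, (k < p)%N -> N2 k k = 6 * Pk k + 2 * Rk k.
  move=> k hk.
  have e1 : inner n (u2 k) (u t k) = 2 * Pk k + Rk k.
    rewrite (inner_ext n (u2 k) (fun i => 2 * mv n Sm (mv n Sm (w k)) i + mv n (Rc t) (w k) i) (u t k) (w k)).
    - by rewrite inner_2add_l inner_sym_mat.
    - exact: V3.
    - exact: V1.
  have e2 : inner n (u1 t k) (u1 t k) = Pk k.
    rewrite (inner_ext n (u1 t k) (fun i => - mv n Sm (w k) i) (u1 t k) (fun i => - mv n Sm (w k) i)); try exact: V2.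
    by rewrite inner_opp_l inner_sym inner_opp_l Ropp_involutive.
  rewrite /N2 e1 e2 (inner_sym n (u t k)) e1; ring.
pose T := rsum p (fun i => sig n Sm w i i).
pose Q := rsum p (fun i => rsum p (fun j => sig n Sm w i j * sig n Sm w i j)).
pose P2 := rsum p Pk.
pose Rr := rsum p Rk.
have h1t : h1 t = -2 * T.
  rewrite Hh1t /T -rsum_scal; apply: rsum_ext => k hk; exact: FN1.
have h2v : h2 = 6 * P2 + 2 * Rr + h1 t * h1 t - 4 * Q.
  rewrite /h2 (rsum_ext _ _ (fun k => (6 * Pk k + 2 * Rk k) + (h1 t * (-2 * sig n Sm w k k) - 4 * rsum p (fun j => sig n Sm w k j * sig n Sm w k j)))).
    rewrite rsum_plus rsum_minus rsum_plus !rsum_scal -/T h1t /P2 /Rr /Q; ring.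
  move=> k hk; rewrite rsum_plus -FN2 //.
  rewrite (rsum_ext _ _ (fun j => N2 k j * delta j k)); last by move=> j hj; rewrite FA.
  rewrite rsum_delta //; congr (_ + _).
  rewrite (rsum_ext _ _ (fun j => h1 t * (N1 t k j * delta j k) - 4 * (sig n Sm w k j * sig n Sm w k j))).
    by rewrite rsum_minus rsum_scal rsum_delta // FN1 // -rsum_scal.
  move=> j hj; rewrite FAD // !FN1 // (sigS j k); ring.
have [G HG] := choice_fun p (fun j c => forall k, (k < n)%coq_nat -> mv n (B t) (e j) k = rsum p (fun m => c m * w m k))
   (fun j hj => Hsp2 j (elimT ltP hj)).
have [H HH] := choice_fun p (fun i c => forall k, (k < n)%coq_nat -> w i k = rsum p (fun m => c m * mv n (B t) (e m) k))
   (fun i hi => Hsp1 i (elimT ltP hi)).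
have hAB : forall (x : vec) k, (k < n)%N -> mv n (transp (A t)) (mv n (B t) x) k = x k.
  move=> x k; apply: (cv_eqP n (mv n (transp (A t)) (mv n (B t) x)) x).
  by rewrite (cv_mv n (transp (A t))) (cv_mv n (B t)) mulmxA eB (mx_transp n (A t)) mulmxV ?unitmx_tr // mul1mx.
have He2 : forall j k, (j < p)%N -> (k < n)%N -> e j k = rsum p (fun m => G j m * z m k).
  move=> j k hj hk; rewrite -hAB // (mv_ext n _ _ (fun k => rsum p (fun m => G j m * w m k))).
    by rewrite mv_lin.
  by move=> k' hk'; apply: HG => //; apply/ltP.
have Hv : forall s j k, (j < p)%N -> (k < n)%N -> mv n (B s) (e j) k = rsum p (fun m => G j m * u s m k).
  move=> s j k hj hk; rewrite (mv_ext n _ _ (fun k => rsum p (fun m => G j m * z m k))).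
    by rewrite mv_lin.
  by move=> k' hk'; apply: He2.
have HM : forall s, det p (Mgram n p A e s) = det p G * det p G * h s.
  move=> s.
  have E : mx p (Mgram n p A e s) = mx p (mm p (mm p G (N s)) (transp G)).
    apply: mx_ext => i l hi hl; rewrite /Mgram.
    by apply: (gram_expand n p G (fun j => mv n (B s) (e j)) (u s)) => k hk; apply: Hv.
  rewrite det_mx E !mx_mm mx_transp !det_mulmx det_tr -det_mx -/(h s) -det_mx.
  exact: mul3.
have hG : det p G <> 0.
  have E : mx p (mm p H G) = 1%:M%R.
    rewrite -(mx_scalar p 1); apply: mx_ext => i l hi hl.
    have := orth_delta n p w i l Hw hi hl.
    rewrite (inner_ext n (w i) (fun k => rsum p (fun m => H i m * mv n (B t) (e m) k)) (w l) (w l)) //; last first.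
      by move=> k hk; apply: HH => //; apply/ltP.
    rewrite inner_lin_l => <-; rewrite Rmult_1_l; apply: rsum_ext => m hm; congr (_ * _).
    rewrite (inner_ext n (mv n (B t) (e m)) (fun k => rsum p (fun q => G m q * w q k)) (w l) (w l)) //; last first.
      by move=> k hk; apply: HG => //; apply/ltP.
    rewrite inner_lin_l (rsum_ext _ _ (fun q => G m q * delta q l)) ?rsum_delta //.
    by move=> q hq; rewrite (orth_delta n p).
  have := congr1 (@determinant _ p) E; rewrite mx_mm det_mulmx det1 /= -!det_mx => E2 E3.
  move: E2; rewrite E3 GRing.mulr0 => /eqP; rewrite eq_sym GRing.oner_eq0; by [].
set D := det p G * det p G.
have hD : 0 < D by exact: (Rsqr_pos_lt _ hG).
have hdetD := D_det _ _ _ _ (proj1 (HA t hts)).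
have [d1 [hd1 Hd1]] := D_ne0 _ _ _ hdetD hdet.
have [d2 [hd2 Hd2]] : exists d, 0 < d /\ forall s, Rabs (s - t) < d -> 0 < h s.
  by apply: (D_pos h t (h1 t) (Hh t hts hdet)); rewrite ht; lra.
pose del := Rmin (Rmin d1 d2) (Rmin (t - a) (b - t)).
have hdel1 : del <= d1 by apply: Rle_trans (Rmin_l _ _) (Rmin_l _ _).
have hdel2 : del <= d2 by apply: Rle_trans (Rmin_l _ _) (Rmin_r _ _).
have hdel3 : del <= t - a by apply: Rle_trans (Rmin_r _ _) (Rmin_l _ _).
have hdel4 : del <= b - t by apply: Rle_trans (Rmin_r _ _) (Rmin_r _ _).
have hdel : 0 < del.
  apply: Rmin_glb_lt; apply: Rmin_glb_lt; lra.
have Hnear : forall s, Rabs (s - t) < del -> [/\ a < s < b, det n (A s) <> 0 & 0 < h s].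
  move=> s hs; have [hs1 hs2] := Rabs_def2 _ _ hs.
  split; first lra.
  - apply: Hd1; lra.
  - apply: Hd2; lra.
pose c := - / (2 * INR p).
have gWE : forall s, gW n p A e s = exp (c * ln (D * h s)).
  by move=> s; rewrite /gW /Rpower HM.
pose g1 s := gW n p A e s * (c * (h1 s / h s)).
have Hg : forall s, Rabs (s - t) < del -> derivable_pt_lim (gW n p A e) s (g1 s).
  move=> s hs; have [hs1 hs2 hs3] := Hnear s hs.
  apply: (D_ext (fun s => exp (c * ln (D * h s)))); first by move=> x; rewrite gWE.
  have hDh : 0 < D * h s by apply: Rmult_lt_0_compat.
  have Hin : derivable_pt_lim (fun x => c * ln (D * h x)) s (c * (/ (D * h s) * (D * h1 s))).
    apply: D_scal.
    exact: (derivable_pt_lim_comp (fun x => D * h x) ln s (D * h1 s) (/ (D * h s)) (D_scal D _ _ _ (Hh s hs1 hs2)) (derivable_pt_lim_ln _ hDh)).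
  have := derivable_pt_lim_comp _ exp s _ _ Hin (derivable_pt_lim_exp _).
  apply: D_eq; rewrite /g1 gWE; field; split; lra.
have hht : h t <> 0 by rewrite ht; lra.
pose g2 := g1 t * (c * (h1 t / h t)) + gW n p A e t * (c * ((h2 * h t - h1 t * h1 t) / Rsqr (h t))).
exists del, g1, g2; split; first exact: hdel.
split; first exact: Hg.
split.
  have Ht : Rabs (t - t) < del by rewrite Rminus_diag_eq // Rabs_R0.
  apply: (D_mul (gW n p A e) (fun s => c * (h1 s / h s))) (Hg t Ht) _.
  apply: D_scal; exact: (derivable_pt_lim_div _ _ _ _ _ Hh1 (Hh t hts hdet) hht).
have eT : trS1 n p w Sm = T by rewrite trS1_eq.
have eQ : trS1sq n p w Sm = Q by rewrite trS1sq_eq.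
have eU : trS2TS2 n p w Sm = P2 - Q by rewrite trS2_eq // rsum_minus.
have hgt : gW n p A e t <> 0 by rewrite gWE; apply: Rgt_not_eq; apply: exp_pos.
have hpR : INR p <> 0 by apply: not_0_INR; lia.
rewrite eT eQ eU /g2 /g1 ht h2v h1t /c -/Rr /Rsqr.
field; split => //.
Qed.
End Aux.

Theorem proposition2p1
  (n p : nat) (a b t0 : R) (A A1 A2 Rc : R -> mat) (e w : nat -> vec) (t : R) :
  a < t0 < b ->
  (* A is a C^2 family on I = (a,b) with A' = A1, A'' = A2 *)
  (forall s, a < s < b -> forall i j, (i < n)%nat -> (j < n)%nat ->
     derivable_pt_lim (fun u => A u i j) s (A1 s i j) /\
     derivable_pt_lim (fun u => A1 u i j) s (A2 s i j)) ->
  (* R_t is self-adjoint *)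
  (forall s, a < s < b -> forall i j, (i < n)%nat -> (j < n)%nat ->
     Rc s i j = Rc s j i) ->
  (* Jacobi equation A'' + R A = 0 *)
  (forall s, a < s < b -> forall i j, (i < n)%nat -> (j < n)%nat ->
     A2 s i j + mm n (Rc s) (A s) i j = 0) ->
  (* ker A_{t0} ∩ ker A'_{t0} = 0 *)
  (forall v : vec,
     (forall i, (i < n)%nat -> mv n (A t0) v i = 0 /\ mv n (A1 t0) v i = 0) ->
     forall i, (i < n)%nat -> v i = 0) ->
  (* Lagrange condition *)
  (forall s, a < s < b -> forall v u : vec,
     inner n (mv n (A1 s) v) (mv n (A s) u) = inner n (mv n (A s) v) (mv n (A1 s) u)) ->
  (* W ⊂ E_{t0} p-dimensional with orthonormal basis e_1..e_p *)
  (1 <= p <= n)%nat ->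
  orthonormal n p e ->
  (* t regular *)
  a < t < b -> det n (A t) <> 0 ->
  (* w_1..w_p orthonormal basis of W_t = A_t^{-*} W *)
  orthonormal n p w ->
  (forall i, (i < p)%nat -> in_span n p (fun j => mv n (Ainvstar n A t) (e j)) (w i)) ->
  (forall j, (j < p)%nat -> in_span n p w (mv n (Ainvstar n A t) (e j))) ->
  exists (delta : R) (g1 : R -> R) (g2 : R),
    0 < delta /\
    (forall s, Rabs (s - t) < delta -> derivable_pt_lim (gW n p A e) s (g1 s)) /\
    derivable_pt_lim g1 t g2 /\
    INR p * (g2 / gW n p A e t) =
      / INR p * (trS1 n p w (Sop n A A1 t)) ^ 2
      - trS1sq n p w (Sop n A A1 t)
      - 3 * trS2TS2 n p w (Sop n A A1 t)
      - rsum p (fun i => inner n (mv n (Rc t) (w i)) (w i)).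
Proof.
  exact (Aux.main n p a b t0 A A1 A2 Rc e w t).
Qed.
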